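(* Let $\gamma:[0,1]\to\mathbb{R}_+$ be a differentiable increasing function with $\gamma(x)>0$ for $x>0$, and assume $\lim_{x\downarrow0}x\gamma'(x)/\gamma(x)=0$. Then $$\lim_{x\downarrow0}\frac{1}{\gamma(x)}\int_0^{1/2}\gamma(xy)\frac{dy}{y\sqrt{\log(1/y)}}=\infty .$$ *)

(* Defs.v *)
From HB Require Import structures.
From mathcomp Require Import all_boot all_order all_algebra.
From mathcomp Require Import all_classical all_reals all_analysis.
Set Implicit Arguments. Unset Strict Implicit. Unset Printing Implicit Defensive.
Import Order.TTheory GRing.Theory Num.Theory.
Import numFieldNormedType.Exports.
Local Open Scope classical_set_scope.
Local Open Scope ring_scope.

Definition differentiable_on_01 {R : realType} (g : R -> R) : Prop :=
  [/\ {in `]0, 1[, forall x, derivable g x 1},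
      cvg ((fun h => (g h - g 0) / h) @ 0^'+) &
      cvg ((fun h => (g h - g 1) / (h - 1)) @ 1^'-)].

(* Main.v *)
Require Import Defs.
From HB Require Import structures.
From mathcomp Require Import all_boot all_order all_algebra.
From mathcomp Require Import all_classical all_reals all_analysis.
From mathcomp Require Import ring lra.
Import Order.TTheory GRing.Theory Num.Theory.
Import numFieldNormedType.Exports.
Local Open Scope classical_set_scope.
Local Open Scope ring_scope.

Lemma int_mono d (T : measurableType d) (R : realType)
  (mu : {measure set T -> \bar R}) (D D' : set T) (f g : T -> \bar R) :
  D' `<=` D -> (forall x, D x -> (0 <= f x)%E) ->
  (forall x, D' x -> (0 <= g x)%E) -> (forall x, D' x -> (g x <= f x)%E) ->
  (\int[mu]_(x in D') g x <= \int[mu]_(x in D) f x)%E.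
Proof.
move=> DD f0 g0 gf; rewrite !ge0_integralE//.
apply: ereal_sup_le => _ [h hg <-]; exists h => // x.
apply: le_trans (hg x) _; rewrite /patch.
case: ifPn => [/[!inE] xD'|_]; first by rewrite ifT ?inE; [exact: gf| exact: DD].
by case: ifPn => [/[!inE] /f0|].
Qed.
Lemma near_right0 (R : realType) (P : R -> Prop) :
  (\forall x \near 0^'+, P x) -> exists2 d, 0 < d & forall t, 0 < t < d -> P t.
Proof.
move=> /nbhs_ballP[d /= d0 Hd]; exists d => // t /andP[t0 td].
apply: Hd => //; rewrite /ball /= sub0r normrN gtr0_norm//.
Qed.

Lemma int_inv (R : realType) (c a b : R) : 0 < a -> a < b ->
  (\int[@lebesgue_measure R]_(y in `[a, b]) (c / y)%:E = (c * (ln b - ln a))%:E)%E.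
Proof.
move=> a0 ab.
have cln : forall y, 0 < y -> {for y, continuous (fun y => c * ln y)}.
  move=> y y0; apply: continuousM; first exact: cst_continuous.
  exact: continuous_ln.
rewrite (@continuous_FTC2 _ _ (fun y => c * ln y)) //.
- by rewrite -EFinB mulrBr.
- apply: continuous_in_subspaceT => y; rewrite inE /= in_itv /= => /andP[ay _].
  apply: continuousM; first exact: cst_continuous.
  apply: inv_continuous; rewrite gt_eqF//; exact: lt_le_trans ay.
- split.
  + move=> y /[1!in_itv] /= /andP[ay _]; have y0 : 0 < y by exact: lt_trans ay.
    apply: ex_derive; apply: is_deriveZ.
    apply: is_derive1_ln y0.
  + by apply: cvg_at_right_filter; apply: cln.
  + by apply: cvg_at_left_filter; apply: cln; exact: lt_trans ab.
- move=> y /[1!in_itv] /= /andP[ay _]; have y0 : 0 < y by exact: lt_trans ay.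
  rewrite derive1E.
  have H := is_deriveZ c (is_derive1_ln y0).
  have -> : (fun y => c * ln y) = c \*: (@ln R) by [].
  by rewrite (@derive_val _ _ _ _ _ _ _ H).
Qed.

Lemma ratio (R : realType) (g : R -> R) (a d x : R) :
  {in `]0, 1[, forall x, derivable g x 1} ->
  {in `[0, 1] &, {homo g : x y / x <= y}} ->
  (forall x, 0 < x <= 1 -> 0 < g x) ->
  0 < a < 1 ->
  (forall t, 0 < t < d -> `|0 - t * derive1 g t / g t| < a / 2) ->
  0 < x -> x < d -> x < 1 -> g x / 2 <= g (a * x).
Proof.
move=> dg hg pg /andP[a0 a1] hd x0 xd x1.
have ax : a * x < x by rewrite gtr_pMl.
have ax0 : 0 < a * x by rewrite mulr_gt0.
have sub : forall y, a * x <= y <= x -> y \in `]0, 1[.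
  move=> y /andP[h1 h2]; rewrite in_itv /=; apply/andP; split.
    exact: lt_le_trans h1. exact: le_lt_trans x1.
have [c cI E] := @MVT R g (derive1 g) (a * x) x ax
  (fun y yI => ltac:(rewrite derive1E; apply: derivableP; apply: dg; apply: sub;
     move: yI; rewrite in_itv /= => /andP[? ?]; apply/andP; split; exact: ltW))
  (@derivable_within_continuous R R^o g `[a * x, x] (fun y yI => dg y (sub y ltac:(move: yI; rewrite in_itv /=; done)))).
move: cI; rewrite in_itv /= => /andP[c1 c2].
have c0 : 0 < c by exact: lt_trans c1.
have gc : 0 < g c by apply: pg; rewrite c0 /= ltW// (lt_trans c2).
have gcx : g c <= g x.
  apply: hg; rewrite ?in_itv /= ?ltW //; exact: lt_trans c2 x1.
have := hd c; rewrite c0 (lt_trans c2 xd) => /(_ isT).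
rewrite sub0r normrN => /(le_lt_trans (ler_norm _)).
rewrite ltr_pdivrMr // => hc.
have E2 : g x - g (a * x) <= g x / 2.
  rewrite E -(ler_pM2l c0).
  have xax : 0 <= x - a * x by rewrite subr_ge0 ltW.
  have h1 : c * (derive1 g c * (x - a * x)) <= a / 2 * g c * (x - a * x).
    by rewrite mulrA ler_wpM2r// ltW.
  apply: (le_trans h1).
  have h2 : a / 2 * g c * (x - a * x) <= a / 2 * g x * x.
    have ha : 0 <= a / 2 by lra.
    have gc0 : 0 <= g c by exact: ltW.
    apply: ler_pM => //; first exact: mulr_ge0.
      by rewrite ler_wpM2l.
    by rewrite gerBl mulr_ge0 ?ltW.
  apply: (le_trans h2).
  have gx0 : 0 < g x by apply: pg; rewrite x0 ltW.
  nra.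
lra.
Qed.

Theorem proposition2p10 (R : realType) (gamma : R -> R) :
  differentiable_on_01 gamma ->
  {in `[0, 1] &, {homo gamma : x y / x <= y}} ->
  (forall x, 0 <= x <= 1 -> 0 <= gamma x) ->
  (forall x, 0 < x <= 1 -> 0 < gamma x) ->
  (fun x => x * derive1 gamma x / gamma x) @ 0^'+ --> 0 ->
  (fun x => ((gamma x)^-1)%:E *
     (\int[lebesgue_measure]_(y in `]0%R, (2^-1)%R])
        ((gamma (x * y)) / (y * Num.sqrt (ln y^-1)))%:E))%E
    @ 0^'+ --> +oo%E.
Proof.
move=> [dg _ _] hg g0 gp hcvg.
apply/cvgeyPge => A.
set B := Num.max A 0.
have B0 : 0 <= B by rewrite le_max lexx orbT.
have AB : A <= B by rewrite le_max lexx.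
set s := 4 * B + 4.
have s4 : 4 <= s by rewrite /s; lra.
set N := s ^+ 2.
have N16 : 16 <= N by rewrite /N; nra.
set a := expR (- N).
have a0 : 0 < a by exact: expR_gt0.
have lna : ln a = - N by rewrite /a expRK.
have a2 : a < 2^-1.
  rewrite /a expRN -(invrK 2) ltf_pV2 ?posrE ?expR_gt0 //.
  apply: (lt_le_trans _ (expR_ge1Dx N)); lra.
have a1 : 0 < a < 1 by rewrite a0 /=; lra.
have [d d0 hd] : exists2 d, 0 < d & forall t, 0 < t < d ->
    `|0 - t * derive1 gamma t / gamma t| < a / 2.
  apply: near_right0.
  by move/cvgrPdist_lt : hcvg => /(_ (a / 2)); apply; lra.
near=> x.
have x0 : 0 < x by near: x; exact: nbhs_right_gt.
have xd : x < d by near: x; exact: nbhs_right_lt.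
have x1 : x < 1 by near: x; exact: nbhs_right_lt.
have rat := @ratio R gamma a d x dg hg gp a1 hd x0 xd x1.
set c := gamma (x * a) / s.
have sN : Num.sqrt N = s by rewrite /N sqrtr_sqr ger0_norm //; lra.
have gx0 : 0 < gamma x by apply: gp; rewrite x0 ltW.
have hint : (\int[lebesgue_measure]_(y in `[a, (2^-1)%R]) (c / y)%:E <=
    \int[lebesgue_measure]_(y in `]0%R, (2^-1)%R])
        ((gamma (x * y)) / (y * Num.sqrt (ln y^-1)))%:E)%E.
  apply: int_mono.
  - move=> y /=; rewrite !in_itv /= => /andP[ay ->]; rewrite andbT.
    exact: lt_le_trans ay.
  - move=> y /=; rewrite in_itv /= => /andP[y0 y2]; rewrite lee_fin.
    apply: divr_ge0; last by apply: mulr_ge0; [exact: ltW | exact: sqrtr_ge0].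
    apply: g0; rewrite mulr_ge0 ?ltW //=; nra.
  - move=> y /=; rewrite in_itv /= => /andP[ay y2]; rewrite lee_fin.
    apply: divr_ge0; last by rewrite (le_trans (ltW a0)).
    apply: divr_ge0; last lra.
    apply: g0; rewrite mulr_ge0 ?ltW //=; nra.
  - move=> y /=; rewrite in_itv /= => /andP[ay y2]; rewrite lee_fin.
    have y0 : 0 < y by exact: lt_le_trans ay.
    have lny0 : 0 < ln y^-1.
      apply: ln_gt0; rewrite -invr1 ltf_pV2 ?posrE //; lra.
    have lnyN : ln y^-1 <= N.
      have -> : N = ln a^-1 by rewrite lnV ?posrE // lna opprK.
      rewrite ler_ln ?posrE ?invr_gt0 //.
      by rewrite lef_pV2 ?posrE.
    have sq0 : 0 < Num.sqrt (ln y^-1) by rewrite sqrtr_gt0.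
    have sqs : Num.sqrt (ln y^-1) <= s by rewrite -sN ler_sqrt //; lra.
    have gxy : gamma (x * a) <= gamma (x * y).
      apply: hg.
      - by rewrite in_itv /= mulr_ge0 ?ltW //=; nra.
      - by rewrite in_itv /= mulr_ge0 ?ltW //=; nra.
      - by rewrite ler_wpM2l // ltW.
    have -> : c / y = gamma (x * a) * (y * s)^-1.
      rewrite /c; field; apply/andP; split; rewrite gt_eqF //; lra.
    apply: ler_pM => //.
    - by apply: g0; apply/andP; split; nra.
    - by rewrite invr_ge0; apply: mulr_ge0; lra.
    - rewrite lef_pV2 ?posrE ?mulr_gt0 //; last lra.
      by rewrite ler_wpM2l //; lra.
rewrite int_inv // in hint.
apply: (le_trans _ (lee_wpmul2l _ hint)); last by rewrite lee_fin invr_ge0 ltW.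
rewrite -EFinM lee_fin.
rewrite lna lnV ?posrE // opprK.
have ln2 : ln (2 : R) < 2 by apply: ln_sublinear.
rewrite [a * x]mulrC in rat.
set L := - ln 2 + N.
have hLs : 2 * (B + 1) <= L / s.
  rewrite ler_pdivlMr; last lra.
  rewrite /L /N /s; nra.
apply: (@le_trans _ _ ((gamma x)^-1 * (gamma x * (B + 1)))).
  by rewrite mulKf ?gt_eqF //; lra.
apply: ler_wpM2l; first by rewrite invr_ge0; lra.
rewrite /c mulrAC -mulrA.
have H0 : 0 <= gamma (x * a) by lra.
apply: (@le_trans _ _ (gamma (x * a) * (2 * (B + 1)))); last first.
  by rewrite ler_wpM2l.
rewrite mulrA ler_wpM2r //. all: lra.
Unshelve. all: by end_near.
Qed.
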